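(* Let $P$ be a product rule. The $P$-product is bilinear, associative and commutative if and only if $P$ is simple, i.e. there exist $\alpha,\beta,\gamma\in\mathbb Q$ with $\alpha\gamma=\beta(\beta-1)$ such that \[P(x,\dot x,y,\dot y)\approx \alpha\cdot xy+\beta\cdot(x\dot y+\dot x y)+\gamma\cdot\dot x\dot y.\]
   Context: Let $\Sigma$ be a finite alphabet, $\Sigma^*$ the set of finite words with empty word $\varepsilon$. A series is a function $f:\Sigma^*\to\mathbb Q$; write $f_w=f(w)$; the set of series $\mathbb Q\langle\langle\Sigma\rangle\rangle$ is a $\mathbb Q$-vector space under pointwise operations, with zero series $\mathbb 0$. For $a\in\Sigma$ the left derivative $\delta_a f$ is the series $w\mapsto f(aw)$. Terms: for a set $X$ of variables, $\mathrm{Terms}(X)$ is the set of syntactic terms generated by $u,v::=x\mid 0\mid c\cdot u\mid u+v\mid u*v$ ($x\in X$, $c\in\mathbb Q$); we write $uv$ for $u*v$. A product rule is a term $P\in\mathrm{Terms}(\{x,\dot x,y,\dot y\})$; $P(s_1,s_2,s_3,s_4)$ denotes substitution for $x,\dot x,y,\dot y$. $P$-product: the $P$-product $*$ on series and the semantics $[\![u]\!]_\varrho$ of terms under valuations $\varrho:X\to\mathbb Q\langle\langle\Sigma\rangle\rangle$ are the unique pair with $(f*g)_\varepsilon=f_\varepsilon g_\varepsilon$, $\delta_a(f*g)=[\![P]\!]_{[x\mapsto f,\dot x\mapsto\delta_af,y\mapsto g,\dot y\mapsto\delta_ag]}$ for all $a\in\Sigma$, and $[\![0]\!]_\varrho=\mathbb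 0$, $[\![x]\!]_\varrho=\varrho(x)$, $[\![c\cdot u]\!]_\varrho=c[\![u]\!]_\varrho$, $[\![u+v]\!]_\varrho=[\![u]\!]_\varrho+[\![v]\!]_\varrho$, $[\![u*v]\!]_\varrho=[\![u]\!]_\varrho*[\![v]\!]_\varrho$. BAC means: for all series $f,g,h$ and $c\in\mathbb Q$, $(f+g)*h=f*h+g*h$, $(c f)*g=c(f*g)$, $f*(g*h)=(f*g)*h$, $f*g=g*f$. Term equivalence: $u\approx v$ iff $u,v$ denote the same polynomial in the commutative polynomial ring $\mathbb Q[X]$ when the term constructors are read as polynomial operations. *)

(* Defs.v *)
From HB Require Import structures.
From mathcomp Require Import all_boot all_order all_algebra.
From mathcomp Require Import mpoly.
Set Implicit Arguments. Unset Strict Implicit. Unset Printing Implicit Defensive.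
Import Order.TTheory GRing.Theory Num.Theory.
Local Open Scope ring_scope.

Definition series (Sigma : finType) := seq Sigma -> rat.

Section Series.
Variable Sigma : finType.
Definition szero : series Sigma := fun _ => 0.
Definition sadd (f g : series Sigma) : series Sigma := fun w => f w + g w.
Definition sscale (c : rat) (f : series Sigma) : series Sigma := fun w => c * f w.
Definition sderiv (a : Sigma) (f : series Sigma) : series Sigma := fun w => f (a :: w).
Definition seq_eq (f g : series Sigma) : Prop := forall w, f w = g w.
End Series.

Inductive term (X : Type) : Type :=
| TVar of X
| TZero
| TScale of rat & term X
| TAdd of term X & term X
| TMul of term X & term X.
Arguments TZero {X}.

Fixpoint sem (Sigma : finType) (X : Type)
    (mul : series Sigma -> series Sigma -> series Sigma)
    (rho : X -> series Sigma) (u : term X) : series Sigma :=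
  match u with
  | TVar x => rho x
  | TZero => @szero Sigma
  | TScale c u => sscale c (sem mul rho u)
  | TAdd u v => sadd (sem mul rho u) (sem mul rho v)
  | TMul u v => mul (sem mul rho u) (sem mul rho v)
  end.

Inductive pvar := PX | PXd | PY | PYd.
Definition product_rule := term pvar.

Definition prule_env (Sigma : finType) (f g : series Sigma) (a : Sigma)
  : pvar -> series Sigma :=
  fun v => match v with
           | PX => f | PXd => sderiv a f | PY => g | PYd => sderiv a g end.

(* The P-product.  [pprod_approx P n] computes the P-product correctly on all
   words of length <= n, by recursion on n, following the defining equations
     (f*g)_eps = f_eps g_eps,
     delta_a (f*g) = [[P]]_[x:=f, xdot:=delta_a f, y:=g, ydot:=delta_a g]
   (a coefficient of a word of length m+1 only needs products on words of
   length m). *)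
Fixpoint pprod_approx (Sigma : finType) (P : product_rule) (n : nat)
    : series Sigma -> series Sigma -> series Sigma :=
  fun f g w =>
    match n with
    | 0 => f [::] * g [::]
    | n'.+1 =>
        match w with
        | [::] => f [::] * g [::]
        | a :: w' => sem (pprod_approx P n') (prule_env f g a) P w'
        end
    end.

Definition pprod (Sigma : finType) (P : product_rule) (f g : series Sigma)
  : series Sigma := fun w => pprod_approx P (size w) f g w.

Definition BAC (Sigma : finType) (P : product_rule) : Prop :=
  let mul := pprod P in
  (forall f g h : series Sigma, seq_eq (mul (sadd f g) h) (sadd (mul f h) (mul g h))) /\
  (forall (c : rat) (f g : series Sigma), seq_eq (mul (sscale c f) g) (sscale c (mul f g))) /\
  (forall f g h : series Sigma, seq_eq (mul f (mul g h)) (mul (mul f g) h)) /\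
  (forall f g : series Sigma, seq_eq (mul f g) (mul g f)).

Fixpoint term_poly (X : Type) (n : nat) (ix : X -> 'I_n) (u : term X)
  : {mpoly rat[n]} :=
  match u with
  | TVar x => 'X_(ix x)
  | TZero => 0
  | TScale c u => c *: term_poly ix u
  | TAdd u v => term_poly ix u + term_poly ix v
  | TMul u v => term_poly ix u * term_poly ix v
  end.

Definition pvar_idx (v : pvar) : 'I_4 :=
  match v with
  | PX => @Ordinal 4 0 isT | PXd => @Ordinal 4 1 isT
  | PY => @Ordinal 4 2 isT | PYd => @Ordinal 4 3 isT end.

Definition teq (u v : product_rule) : Prop :=
  term_poly pvar_idx u = term_poly pvar_idx v.

Definition simple_rule (a b c : rat) : product_rule :=
  TAdd (TAdd (TScale a (TMul (TVar PX) (TVar PY)))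
             (TScale b (TAdd (TMul (TVar PX) (TVar PYd)) (TMul (TVar PXd) (TVar PY)))))
       (TScale c (TMul (TVar PXd) (TVar PYd))).

Definition simple (P : product_rule) : Prop :=
  exists a b c : rat, a * c = b * (b - 1) /\ teq P (simple_rule a b c).

(* Main.v *)
Require Import Defs.
From HB Require Import structures.
From mathcomp Require Import all_boot all_order all_algebra mpoly.
From mathcomp Require Import boolp.
From mathcomp Require Import ring lra.
Set Implicit Arguments. Unset Strict Implicit. Unset Printing Implicit Defensive.
Import GRing.Theory Num.Theory.
Local Open Scope ring_scope.

Section UAlg.
Variable Sigma : finType.
Local Notation S := (series Sigma).
Variable mul : S -> S -> S.
Hypothesis mulDl : forall f g h, mul (sadd f g) h = sadd (mul f h) (mul g h).
Hypothesis mulZl : forall c f g, mul (sscale c f) g = sscale c (mul f g).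
Hypothesis mulA : forall f g h, mul f (mul g h) = mul (mul f g) h.
Hypothesis mulC : forall f g, mul f g = mul g f.

Lemma mulDr f g h : mul h (sadd f g) = sadd (mul h f) (mul h g).
Proof. by rewrite mulC mulDl (mulC f) (mulC g). Qed.
Lemma mulZr c f g : mul g (sscale c f) = sscale c (mul g f).
Proof. by rewrite mulC mulZl mulC. Qed.
Lemma mul0l f : mul (@szero Sigma) f = @szero Sigma.
Proof.
have -> : @szero Sigma = sscale 0 (@szero Sigma) by apply: funext => w; rewrite /sscale mul0r.
by rewrite mulZl; apply: funext => w; rewrite /sscale /szero !mul0r.
Qed.

Definition U := (rat * S)%type.
HB.instance Definition _ := gen_eqMixin U.
HB.instance Definition _ := gen_choiceMixin U.

Definition uadd (x y : U) : U := (x.1 + y.1, sadd x.2 y.2).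
Definition uopp (x : U) : U := (- x.1, sscale (-1) x.2).
Definition uzero : U := (0, @szero Sigma).
Definition uone : U := (1, @szero Sigma).
Definition umul (x y : U) : U :=
  (x.1 * y.1, sadd (sadd (sscale x.1 y.2) (sscale y.1 x.2)) (mul x.2 y.2)).

Ltac pw := apply: funext => w; rewrite /sadd /sscale /szero /=; ring.

Lemma uaddA : associative uadd.
Proof. move=> [a x] [b y] [c z]; rewrite /uadd /=; congr (_, _); [ring|pw]. Qed.
Lemma uaddC : commutative uadd.
Proof. move=> [a x] [b y]; rewrite /uadd /=; congr (_, _); [ring|pw]. Qed.
Lemma uadd0 : left_id uzero uadd.
Proof. move=> [a x]; rewrite /uadd /=; congr (_, _); [ring|pw]. Qed.
Lemma uaddN : left_inverse uzero uopp uadd.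
Proof. move=> [a x]; rewrite /uadd /=; congr (_, _); [ring|pw]. Qed.

HB.instance Definition _ := GRing.isZmodule.Build U uaddA uaddC uadd0 uaddN.

Lemma umulA : associative umul.
Proof.
move=> [a x] [b y] [c z]; rewrite /umul /=; congr (_, _); first ring.
rewrite !mulDl !mulDr !mulZl !mulZr mulA; pw.
Qed.
Lemma umulC : commutative umul.
Proof.
move=> [a x] [b y]; rewrite /umul /=; congr (_, _); first ring.
rewrite mulC; pw.
Qed.
Lemma umul1 : left_id uone umul.
Proof.
move=> [a x]; rewrite /umul /=; congr (_, _); first ring.
rewrite mul0l; pw.
Qed.
Lemma umulD : left_distributive umul uadd.
Proof.
move=> [a x] [b y] [c z]; rewrite /umul /uadd /=; congr (_, _); first ring.
rewrite mulDl; pw.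
Qed.
Lemma uone_neq0 : uone != uzero.
Proof. by apply/eqP => -[]. Qed.

HB.instance Definition _ := GRing.Zmodule_isComNzRing.Build U umulA umulC umul1 umulD uone_neq0.

Definition emb (c : rat) : U := (c, @szero Sigma).
Lemma emb_nmod : GRing.nmod_morphism emb.
Proof.
split; first by [].
move=> a b; rewrite /emb; congr (_, _); pw.
Qed.
Lemma emb_mon : GRing.monoid_morphism emb.
Proof.
split; first by [].
move=> a b; rewrite /emb /= /GRing.mul /= /umul /=; congr (_, _).
rewrite mul0l; pw.
Qed.
HB.instance Definition _ := GRing.isNmodMorphism.Build rat U emb emb_nmod.
HB.instance Definition _ := GRing.isMonoidMorphism.Build rat U emb emb_mon.

Lemma sound (X : Type) (k : nat) (ix : X -> 'I_k) (rho : X -> S) (h : 'I_k -> U)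
  (hh : forall x, h (ix x) = (0, rho x)) (u : term X) :
  mmap emb h (term_poly ix u) = (0, sem mul rho u).
Proof.
elim: u => [x|| c u IH| u IHu v IHv| u IHu v IHv] /=.
- by rewrite mmapX mmap1U hh.
- by rewrite mmap0.
- rewrite mmapZ IH /GRing.mul /= /umul /=; congr (_, _); first ring.
  rewrite mul0l; pw.
- by rewrite (mmapD h emb) IHu IHv.
- rewrite rmorphM /= IHu IHv /GRing.mul /= /umul /=; congr (_, _); pw.
Qed.

Definition hP (rho : pvar -> S) (i : 'I_4) : U :=
  (0, match val i with 0 => rho PX | 1 => rho PXd | 2 => rho PY | _ => rho PYd end).

Lemma soundP (rho : pvar -> S) (u v : product_rule) :
  teq u v -> sem mul rho u = sem mul rho v.
Proof.
move=> e.
have hh : forall x, hP rho (pvar_idx x) = (0, rho x) by case.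
have := sound hh u; rewrite e (sound hh v) => -[]; done.
Qed.
End UAlg.

Section Loc.
Variable Sigma : finType.
Local Notation S := (series Sigma).
Variable P : product_rule.

Definition close (k : nat) (f g : S) := forall v : seq Sigma, (size v <= k)%N -> f v = g v.
Definition local (k : nat) (mul : S -> S -> S) :=
  forall f f' g g' w, (size w <= k)%N -> close (size w) f f' -> close (size w) g g' ->
    mul f g w = mul f' g' w.

Lemma close_le k k' f g : (k' <= k)%N -> close k f g -> close k' f g.
Proof. by move=> hk h v hv; apply: h; apply: leq_trans hv hk. Qed.

Lemma sem_ext (mul1 mul2 : S -> S -> S) k (Hloc : local k mul1)
  (Hag : forall f g v, (size v <= k)%N -> mul1 f g v = mul2 f g v)
  (X : Type) (rho rho' : X -> S) (Hr : forall x, close k (rho x) (rho' x)) (u : term X) :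
  close k (sem mul1 rho u) (sem mul2 rho' u).
Proof.
elim: u => [x|| c u IH| u IHu v IHv| u IHu v IHv] /= w hw.
- exact: Hr.
- by [].
- by rewrite /sscale IH.
- by rewrite /sadd IHu ?IHv.
- rewrite -Hag //; apply: Hloc => //.
  + by apply: close_le IHu.
  + by apply: close_le IHv.
Qed.

Lemma approx_local m : local m (pprod_approx P m).
Proof.
elim: m => [|m IH] f f' g g' w hw hf hg.
- by rewrite /= hf ?hg.
- case: w hw hf hg => [|a w] hw hf hg; first by rewrite /= hf ?hg.
  rewrite /=; apply: (@sem_ext _ _ (size w)) => //.
  + by move=> f1 f1' g1 g1' v hv; apply: IH; apply: leq_trans hv _.
  + case=> /= v hv.
    * by apply: hf; apply: leq_trans hv _.
    * by rewrite /sderiv; apply: hf.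
    * by apply: hg; apply: leq_trans hv _.
    * by rewrite /sderiv; apply: hg.
Qed.

Lemma approx_stable k : forall m1 m2 (f g : S) w, (size w <= k)%N -> (size w <= m1)%N -> (size w <= m2)%N ->
  pprod_approx P m1 f g w = pprod_approx P m2 f g w.
Proof.
elim: k => [|k IH] m1 m2 f g [|a w] //=; try by case: m1; case: m2.
move=> hk; case: m1 => // m1 h1; case: m2 => // m2 h2 /=.
apply: (@sem_ext _ _ (size w)) => //.
- by move=> f1 f1' g1 g1' v hv; apply: approx_local; apply: leq_trans hv _.
- move=> f1 g1 v hv; apply: IH; apply: leq_trans hv _ => //.
Qed.

Local Notation pp := (@pprod Sigma P).

Lemma pp_approx m f g w : (size w <= m)%N -> pprod_approx P m f g w = pp f g w.
Proof. by move=> h; rewrite /pprod (@approx_stable m m (size w)). Qed.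

Lemma pp_local f f' g g' w : close (size w) f f' -> close (size w) g g' -> pp f g w = pp f' g' w.
Proof. by move=> hf hg; rewrite /pprod; apply: approx_local. Qed.

Lemma pp_cons f g a w : pp f g (a :: w) = sem pp (prule_env f g a) P w.
Proof.
rewrite /pprod /=; apply: (@sem_ext _ _ (size w)) => //.
- by move=> f1 f1' g1 g1' v hv; apply: approx_local.
- by move=> f1 g1 v hv; apply: pp_approx.
Qed.

End Loc.

Lemma pp_localR (Sigma : finType) (P : product_rule) (f g g' : series Sigma) w :
  close (size w) g g' -> pprod P f g w = pprod P f g' w.
Proof. by move=> h; apply: pp_local. Qed.
Lemma pp_localL (Sigma : finType) (P : product_rule) (f f' g : series Sigma) w :
  close (size w) f f' -> pprod P f g w = pprod P f' g w.
Proof. by move=> h; apply: pp_local. Qed.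

Section Step.
Variable Sigma : finType.
Local Notation S := (series Sigma).
Variable P : product_rule.
Local Notation pp := (@pprod Sigma P).
Variables a b c : rat.
Hypothesis Habc : a * c = b * (b - 1).
Hypothesis HP : teq P (simple_rule a b c).

Definition BACn (n : nat) := forall w : seq Sigma, (size w <= n)%N ->
  [/\ (forall f g h, pp (sadd f g) h w = pp f h w + pp g h w),
      (forall (d : rat) f g, pp (sscale d f) g w = d * pp f g w),
      (forall f g h, pp f (pp g h) w = pp (pp f g) h w) &
      (forall f g, pp f g w = pp g f w)].

Definition muln n (f g : S) : S := fun v => if (size v <= n)%N then pp f g v else 0.

Lemma keyK n (IH : BACn n) f g x w : (size w <= n)%N ->
  pp f g (x :: w) = a * pp f g w + b * (pp f (sderiv x g) w + pp (sderiv x f) g w)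
                    + c * pp (sderiv x f) (sderiv x g) w.
Proof.
move=> hw.
have mDl : forall f g h, muln n (sadd f g) h = sadd (muln n f h) (muln n g h).
  move=> f1 g1 h1; apply: funext => v; rewrite /muln /sadd.
  by case: ifP => hv; [case: (IH v hv) => -> | rewrite addr0].
have mZl : forall d f g, muln n (sscale d f) g = sscale d (muln n f g).
  move=> d f1 g1; apply: funext => v; rewrite /muln /sscale.
  by case: ifP => hv; [case: (IH v hv) => _ -> | rewrite mulr0].
have mC : forall f g, muln n f g = muln n g f.
  move=> f1 g1; apply: funext => v; rewrite /muln.
  by case: ifP => hv; [case: (IH v hv) => _ _ _ -> |].
have mA : forall f g h, muln n f (muln n g h) = muln n (muln n f g) h.
  move=> f1 g1 h1; apply: funext => v; rewrite /muln.
  case: ifP => hv //.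
  have c1 : close (size v) (muln n g1 h1) (pp g1 h1).
    by move=> u hu; rewrite /muln (leq_trans hu hv).
  have c2 : close (size v) (muln n f1 g1) (pp f1 g1).
    by move=> u hu; rewrite /muln (leq_trans hu hv).
  rewrite (@pp_local _ _ f1 f1 _ (pp g1 h1)) // (@pp_local _ _ _ (pp f1 g1) h1 h1) //.
  by case: (IH v hv) => _ _ -> .
rewrite pp_cons.
have -> : sem pp (prule_env f g x) P w = sem (muln n) (prule_env f g x) P w.
  apply: (@sem_ext _ _ _ n) => //.
  - by move=> f1 f1' g1 g1' v hv hf hg; apply: pp_local.
  - by move=> f1 g1 v hv; rewrite /muln hv.
rewrite (soundP mDl mZl mA mC _ HP) /= /sadd /sscale /muln /= hw.
by [].
Qed.

Lemma BACn0 : BACn 0.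
Proof.
case=> // _; split=> *; rewrite /pprod /= /sadd /sscale; ring.
Qed.

Lemma BACnS n : BACn n -> BACn n.+1.
Proof.
move=> IH w; case: (leqP (size w) n) => [hw _|hw hw1]; first exact: IH.
case: w hw hw1 => // x w /= hw hw1.
have {hw hw1} hw : (size w <= n)%N by [].
have [AddL ScL Ass Com] := IH w hw.
have K := keyK IH.
have AddR : forall f g h, pp h (sadd f g) w = pp h f w + pp h g w.
  by move=> f g h; rewrite Com AddL !(Com h).
have ScR : forall d f g, pp g (sscale d f) w = d * pp g f w.
  by move=> d f g; rewrite Com ScL Com.
split.
- move=> f g h; rewrite !K //.
  have -> : sderiv x (sadd f g) = sadd (sderiv x f) (sderiv x g) by [].
  rewrite !AddL; ring.
- move=> d f g; rewrite !K //.
  have -> : sderiv x (sscale d f) = sscale d (sderiv x f) by [].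
  rewrite !ScL; ring.
- move=> f g h; rewrite !K //.
  set G := pp g h; set F := pp f g.
  have cG : close (size w) (sderiv x G)
     (sadd (sadd (sscale a (pp g h)) (sscale b (sadd (pp g (sderiv x h)) (pp (sderiv x g) h))))
           (sscale c (pp (sderiv x g) (sderiv x h)))).
    by move=> v hv; rewrite /sderiv /G K ?(leq_trans hv hw).
  have cF : close (size w) (sderiv x F)
     (sadd (sadd (sscale a (pp f g)) (sscale b (sadd (pp f (sderiv x g)) (pp (sderiv x f) g))))
           (sscale c (pp (sderiv x f) (sderiv x g)))).
    by move=> v hv; rewrite /sderiv /F K ?(leq_trans hv hw).
  rewrite (pp_localR P f cG) (pp_localR P (sderiv x f) cG) (pp_localL P h cF) (pp_localL P (sderiv x h) cF).
  rewrite /G /F !(AddL, AddR, ScL, ScR) !Ass.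
  ring: Habc.
- move=> f g; rewrite !K // (Com f g) (Com f (sderiv x g)) (Com (sderiv x f) g) (Com (sderiv x f) (sderiv x g)); ring.
Qed.

Lemma BAC_of_simple : BAC Sigma P.
Proof.
have H : forall n, BACn n by elim=> [|n IHn]; [exact: BACn0 | exact: BACnS].
split; [|split; [|split]] => * w; have [? ? ? ?] := H (size w) w (leqnn _); by [].
Qed.
End Step.

Lemma poly_all_roots (r : {poly rat}) : (forall x, r.[x] = 0) -> r = 0.
Proof.
move=> h; apply/eqP; apply: contraT => nz.
have := max_poly_roots (rs := [seq i%:R | i <- iota 0 (size r)]) nz.
rewrite size_map size_iota ltnn; apply.
- by apply/allP => x _; apply/rootP; apply: h.
- rewrite map_inj_uniq ?iota_uniq // => i j /eqP; rewrite eqr_nat => /eqP.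
  by [].
Qed.

Lemma mpoly0_vanish (p : {mpoly rat[0]}) (v : 'I_0 -> rat) : p.@[v] = 0 -> p = 0.
Proof.
have m0 : forall m : 'X_{1..0}, m = 0%MM by move=> m; apply/mnmP => -[].
move=> h; apply/mpolyP => m; rewrite mcoeff0 (m0 m).
move: h; rewrite mevalE.
under eq_bigr => m' _ do rewrite big_ord0 mulr1.
case: (boolP (0%MM \in msupp p)) => hin; last by move=> _; apply: memN_msupp_eq0.
rewrite (bigD1_seq 0%MM) ?msupp_uniq //= big1 ?addr0 //.
by move=> i; rewrite (m0 i) eqxx.
Qed.

Section Step.
Variable n : nat.
Definition ext (v : 'I_n -> rat) (x : rat) (i : 'I_n.+1) : rat :=
  if insub (val i) is Some j then v j else x.

Lemma ext_widen v x (i : 'I_n) : ext v x (widen_ord (leqnSn n) i) = v i.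
Proof.
rewrite /ext; case: insubP => [j _ hj|]; last by rewrite /= ltn_ord.
by congr v; apply: val_inj.
Qed.

Lemma ext_max v x : ext v x ord_max = x.
Proof. by rewrite /ext; case: insubP => [j _ hj|] //; have := ltn_ord j; rewrite hj /= ltnn. Qed.

Lemma muni_eval (p : {mpoly rat[n.+1]}) v x :
  p.@[ext v x] = (map_poly (meval v) (muni p)).[x].
Proof.
rewrite muniE mevalE raddf_sum horner_sum; apply: eq_bigr => m _.
set c := (p@_m *: _).
rewrite [X in X.[x]](_ : _ = (meval v c) *: 'X^(m ord_max)); last first.
  apply/polyP => i; rewrite coef_map coefZ coefXn coefZ coefXn.
  case: eqP => _; rewrite ?mulr1 ?mulr0 //; exact: raddf0.
rewrite hornerZ hornerXn /c mevalZ mevalX.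
rewrite big_ord_recr /= ext_max mulrA; congr (_ * _ * _).
by apply: eq_bigr => i _; rewrite ext_widen mnmE.
Qed.

Definition rm (m : 'X_{1..n.+1}) : 'X_{1..n} :=
  [multinom m (widen_ord (leqnSn n) i) | i < n].

Lemma rm_inj m1 m2 : rm m1 = rm m2 -> m1 ord_max = m2 ord_max -> m1 = m2.
Proof.
move=> h1 h2; apply/mnmP => i.
case: (unliftP ord_max i) => [j ->|->] //.
have := congr1 (fun m : 'X_{1..n} => m (j : 'I_n)) h1; rewrite /rm !mnmE.
by have -> : lift ord_max j = widen_ord (leqnSn n) j by apply: val_inj; rewrite /= /bump leqNgt ltn_ord.
Qed.

Lemma muni_coef (p : {mpoly rat[n.+1]}) m :
  ((muni p)`_(m ord_max))@_(rm m) = p@_m.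
Proof.
rewrite muniE coef_sum raddf_sum /=.
rewrite (eq_bigr (fun m' => if m' == m then p@_m' else 0)); last first.
  move=> m' _; rewrite coefZ coefXn.
  have [-> | ne] := eqVneq m' m; first by rewrite eqxx mulr1 mcoeffZ mcoeffX eqxx mulr1.
  case: eqP => hk; last by rewrite mulr0; apply: raddf0.
  rewrite mulr1 mcoeffZ mcoeffX; case: eqP => [hr|]; last by rewrite mulr0.
  by case/eqP: ne; apply: rm_inj.
case: (boolP (m \in msupp p)) => hin.
- rewrite (bigD1_seq m) ?msupp_uniq //= eqxx big1 ?addr0 //.
  by move=> i /negbTE ->.
- rewrite big1_seq ?memN_msupp_eq0 // => i hi.
  by case: eqP => // e; move: hin hi; rewrite -e => /negbTE ->.
Qed.
End Step.

Lemma mpoly_vanish n (p : {mpoly rat[n]}) : (forall v, p.@[v] = 0) -> p = 0.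
Proof.
elim: n p => [|n IH] p h.
- by apply: (@mpoly0_vanish _ (fun _ => 0)); apply: h.
have hq : forall k, (muni p)`_k = 0.
  move=> k; apply: IH => v.
  have : map_poly (meval v) (muni p) = 0.
    by apply: poly_all_roots => x; rewrite -muni_eval h.
  by move=> e; have := congr1 (fun q : {poly rat} => q`_k) e; rewrite coef_map coef0.
apply/mpolyP => m; rewrite mcoeff0 -muni_coef hq; exact: mcoeff0.
Qed.

Lemma sem_eps (Sigma : finType) (mul : series Sigma -> series Sigma -> series Sigma)
  (Hm : forall f g, mul f g [::] = f [::] * g [::]) (X : Type) (k : nat) (ix : X -> 'I_k)
  (rho : X -> series Sigma) (v : 'I_k -> rat) (hv : forall x, v (ix x) = rho x [::]) (u : term X) :
  sem mul rho u [::] = (term_poly ix u).@[v].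
Proof.
elim: u => [x|| c u IH| u IHu v' IHv| u IHu v' IHv] /=.
- by rewrite mevalXU hv.
- by rewrite meval0.
- by rewrite mevalZ -IH.
- by rewrite mevalD -IHu -IHv.
- by rewrite Hm mevalM -IHu -IHv.
Qed.

Section PartB.
Variable Sigma : finType.
Variable a0 : Sigma.
Variable P : product_rule.
Local Notation S := (series Sigma).
Local Notation pp := (@pprod Sigma P).

Definition vec (x0 x1 y0 y1 : rat) (i : 'I_4) : rat :=
  match val i with 0 => x0 | 1 => x1 | 2 => y0 | _ => y1 end.
Definition E x0 x1 y0 y1 := (term_poly pvar_idx P).@[vec x0 x1 y0 y1].

Lemma pp0 (f g : S) : pp f g [::] = f [::] * g [::]. Proof. by []. Qed.
Lemma pp1 (f g : S) a : pp f g [:: a] = E (f [::]) (f [:: a]) (g [::]) (g [:: a]).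
Proof. by rewrite /pprod /=; apply: sem_eps => // -[]. Qed.

Definition mk (x0 x1 : rat) : S := fun w => if w is [::] then x0 else x1.

Lemma simple_of_BAC : BAC Sigma P -> simple P.
Proof.
move=> [hadd [hsc [hass hcom]]].
have Eadd : forall x0 x1 y0 y1 z0 z1, E (x0 + y0) (x1 + y1) z0 z1 = E x0 x1 z0 z1 + E y0 y1 z0 z1.
  by move=> x0 x1 y0 y1 z0 z1; have := hadd (mk x0 x1) (mk y0 y1) (mk z0 z1) [:: a0]; rewrite /sadd !pp1.
have Esc : forall d x0 x1 y0 y1, E (d * x0) (d * x1) y0 y1 = d * E x0 x1 y0 y1.
  by move=> d x0 x1 y0 y1; have := hsc d (mk x0 x1) (mk y0 y1) [:: a0]; rewrite /sscale !pp1.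
have Ecom : forall x0 x1 y0 y1, E x0 x1 y0 y1 = E y0 y1 x0 x1.
  by move=> x0 x1 y0 y1; have := hcom (mk x0 x1) (mk y0 y1) [:: a0]; rewrite !pp1.
have Eass : forall x0 x1 y0 y1 z0 z1,
    E x0 x1 (y0 * z0) (E y0 y1 z0 z1) = E (x0 * y0) (E x0 x1 y0 y1) z0 z1.
  by move=> x0 x1 y0 y1 z0 z1; have := hass (mk x0 x1) (mk y0 y1) (mk z0 z1) [:: a0]; rewrite !pp1 ?pp0 ?pp1.
have lin : forall x0 x1 y0 y1, E x0 x1 y0 y1 = x0 * E 1 0 y0 y1 + x1 * E 0 1 y0 y1.
  move=> x0 x1 y0 y1; have := Eadd x0 0 0 x1 y0 y1; rewrite addr0 add0r => ->.
  have := Esc x0 1 0 y0 y1; rewrite mulr1 mulr0 => ->.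
  by have := Esc x1 0 1 y0 y1; rewrite mulr1 mulr0 => ->.
have [al [be [ga form]]] : exists al be ga, forall x0 x1 y0 y1,
    E x0 x1 y0 y1 = al * x0 * y0 + be * (x0 * y1 + x1 * y0) + ga * x1 * y1.
  exists (E 1 0 1 0), (E 1 0 0 1), (E 0 1 0 1) => x0 x1 y0 y1.
  rewrite lin (Ecom 1 0) (Ecom 0 1) (lin y0) (lin y0 y1 0 1) (Ecom 0 1 1 0); ring.
exists al, be, ga; split.
  have := Eass 1 0 1 0 0 1; rewrite !form => h; ring: h.
apply/eqP; rewrite -subr_eq0; apply/eqP; apply: mpoly_vanish => v.
rewrite mevalB.
have -> : (term_poly pvar_idx P).@[v] =
   E (v (pvar_idx PX)) (v (pvar_idx PXd)) (v (pvar_idx PY)) (v (pvar_idx PYd)).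
  apply: meval_eq => -[[|[|[|[|k]]]] hi] //=; congr v; exact: val_inj.
rewrite form /= !(mevalD, mevalZ, mevalM, mevalXU); ring.
Qed.
End PartB.


Theorem mainTheorem2 (Sigma : finType) (hSigma : (0 < #|Sigma|)%N)
    (P : product_rule) :
  BAC Sigma P <-> simple P.
Proof.
split.
- move=> h; case/card_gt0P: hSigma => a0 _.
  exact: (simple_of_BAC a0 h).
- case=> [a [b [c [Habc HP]]]].
  exact: (@BAC_of_simple Sigma P a b c Habc HP).
Qed.
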